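(* Every reduced spherical curve $P$ has at least one of the following: (i) a bigon; (ii) a trigon $R$ and a region $R'\neq R$ such that $R'$ is a trigon or a $4$-gon and $R'$ shares an edge or a crossing with $R$. Here the regions sharing an edge or a crossing with a trigon are the six regions around it: three share an edge with it, and three are diagonally opposite to it at its crossings.
   Context: A spherical curve is a smooth immersion $P:S^1\to S^2$ whose self-intersections are finitely many transverse double points, called crossings. It has at least one crossing. Regions are the components of $S^2\setminus P(S^1)$, and edges are the arcs of the curve between consecutive crossings. An $n$-gon is a region whose boundary consists of $n$ edges; a bigon is a $2$-gon and a trigon is a $3$-gon. A crossing $p$ is reducible if only three distinct regions (rather than four) meet at $p$; equivalently, no other crossing is interlaced with $p$ in the Gauss word. $P$ is reduced if it has no reducible crossing. *)

(* Defs.v *)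
(* Combinatorial model of a spherical curve as a 4-valent
   oriented planar map. *)
From mathcomp Require Import all_boot.
Set Implicit Arguments. Unset Strict Implicit. Unset Printing Implicit Defensive.

Section SphericalCurve.
Variable D : finType.   (* darts = half-edges of the projection graph *)
Variables (e n : D -> D).
(* e : pairs the two half-edges of an edge (arc between consecutive crossings);
   n : rotates counterclockwise through the 4 half-edges at a crossing. *)

(* Face (region) tracing permutation: orbits = regions; a dart d in a face
   orbit stands for the boundary edge {d, e d} of that region. *)
Definition face_perm (d : D) : D := n (e d).
(* Going straight through a crossing: orbits = oriented components of the curve. *)
Definition straight (d : D) : D := n (n (e d)).

Definition same_vertex (x y : D) : bool := fconnect n x y.
Definition same_face (x y : D) : bool := fconnect face_perm x y.
Definition face_size (d : D) : nat := order face_perm d.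

Definition map_step : rel D := fun a b => (b == n a) || (b == e a).

Record spherical_curve : Prop := {
  sc_nonempty : 0 < #|D|;
  sc_e_invol : involutive e;
  sc_e_nofix : forall d, e d != d;
  sc_n_inj : injective n;
  sc_n_deg4 : forall d, order n d = 4;
  sc_connected : forall x y, connect map_step x y;
  (* Euler characteristic 2: V - E + F = 2, i.e. the map is on the sphere *)
  sc_planar : fcard n D + fcard face_perm D = fcard e D + 2;
  (* one immersed circle: exactly two oriented straight-ahead traversals *)
  sc_one_component : fcard straight D = 2
}.

(* The crossing of d is reducible iff fewer than four distinct regions meet
   there, i.e. two distinct darts at it lie on the same region. *)
Definition reducible_at (d : D) : Prop :=
  exists x y, [/\ same_vertex d x, same_vertex d y, x != y & same_face x y].

Definition reduced : Prop := forall d, ~ reducible_at d.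

Definition is_bigon (d : D) : Prop := face_size d = 2.
Definition is_trigon (d : D) : Prop := face_size d = 3.

Definition share_edge (y z : D) : Prop :=
  exists2 x, same_face y x & same_face z (e x).
Definition share_crossing (y z : D) : Prop :=
  exists x w, [/\ same_face y x, same_face z w & same_vertex x w].

End SphericalCurve.

(* Main.v *)
Require Import Defs.
From mathcomp Require Import all_boot.
From mathcomp Require Import zify.
From Stdlib Require Import Classical.
Set Implicit Arguments. Unset Strict Implicit. Unset Printing Implicit Defensive.

Section Proof.
Variables (D : finType) (e n : D -> D).
Hypothesis sc : spherical_curve e n.
Hypothesis red : reduced e n.
Hypothesis nobig : forall d, face_size e n d <> 2.
Hypothesis noadj : forall y z : D, is_trigon e n y ->
  (is_trigon e n z \/ face_size e n z = 4) -> ~~ same_face e n y z ->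
  (share_edge e n y z \/ share_crossing e n y z) -> False.

Local Notation phi := (face_perm e n).

Lemma n_inj : injective n. Proof. exact: sc_n_inj sc. Qed.
Lemma e_inv : involutive e. Proof. exact: sc_e_invol sc. Qed.
Lemma e_inj : injective e. Proof. exact: inv_inj e_inv. Qed.
Lemma phi_inj : injective phi.
Proof. by move=> x y; rewrite /face_perm => /n_inj/e_inj. Qed.

Lemma iter_neq (f : D -> D) x i : 0 < i < order f x -> iter i f x != x.
Proof.
case/andP=> i0 io; apply/eqP=> E.
have := findex_iter io; rewrite E /findex /orbit -orderSpred /= eqxx => i00.
by rewrite -i00 in i0.
Qed.

Lemma n1 x : n x != x.
Proof. by apply: (@iter_neq n x 1); rewrite (sc_n_deg4 sc). Qed.
Lemma n2 x : n (n x) != x.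
Proof. by apply: (@iter_neq n x 2); rewrite (sc_n_deg4 sc). Qed.
Lemma n3 x : n (n (n x)) != x.
Proof. by apply: (@iter_neq n x 3); rewrite (sc_n_deg4 sc). Qed.
Lemma n4 x : n (n (n (n x))) = x.
Proof. by have := iter_order n_inj x; rewrite (sc_n_deg4 sc). Qed.

Lemma sf_sym x y : same_face e n x y = same_face e n y x.
Proof. rewrite /same_face; exact: (fconnect_sym phi_inj x y). Qed.
Lemma sf_trans x y z : same_face e n x y -> same_face e n y z -> same_face e n x z.
Proof. rewrite /same_face; exact: connect_trans. Qed.
Lemma sv_sym x y : same_vertex n x y = same_vertex n y x.
Proof. rewrite /same_vertex; exact: (fconnect_sym n_inj x y). Qed.

Lemma dist x y : same_vertex n x y -> x != y -> ~~ same_face e n x y.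
Proof.
move=> vxy xy; apply/negP=> fxy; apply: (red (d:=x)).
by exists x, y; split => //; apply: connect0.
Qed.

Lemma sf_ed d : same_face e n (e d) (n d).
Proof. by have := fconnect1 phi (e d); rewrite /face_perm e_inv. Qed.

Lemma not_sf_ed d : ~~ same_face e n d (e d).
Proof.
apply/negP=> H; have H2 := sf_trans H (sf_ed d).
have := @dist d (n d) (fconnect1 n d); rewrite eq_sym n1 H2.
by move=> /(_ isT).
Qed.


Lemma k_ge3 d : 3 <= face_size e n d.
Proof.
rewrite /face_size; have := order_gt0 phi d.
case Ho: (order phi d) => [|[|[|k]]] // _; last first.
  by have := @nobig d; rewrite /face_size Ho.
have : phi d \in orbit phi d by rewrite -fconnect_orbit fconnect1.
rewrite /orbit Ho /= inE /face_perm => /eqP Hd.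
have Hv : same_vertex n (e d) (n d).
  by have := fconnect_iter n 2 (e d); rewrite /= Hd.
have Hne : e d != n d.
  by apply/eqP=> E; move: (n2 d); rewrite -E Hd eqxx.
by move: (dist Hv Hne); rewrite sf_ed.
Qed.

Definition tp d := (face_size e n (e d) == 3) + (face_size e n (n (n (n (e d)))) == 3).

Lemma tp0 d : face_size e n d <= 4 -> tp d = 0.
Proof.
move=> H4.
have Hz : is_trigon e n d \/ face_size e n d = 4.
  by have := k_ge3 d; rewrite /is_trigon; move: H4; case: (face_size e n d) => [|[|[|[|[|k]]]]]; auto.
rewrite /tp.
case E1: (face_size e n (e d) == 3).
  exfalso; apply: (noadj (y:=e d) (z:=d)) => //; first exact/eqP.
    by rewrite sf_sym not_sf_ed.
  left; exists (e d); first exact: connect0.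
  by rewrite e_inv; exact: connect0.
case E2: (face_size e n (n (n (n (e d)))) == 3) => //.
exfalso; apply: (noadj (y:=n (n (n (e d)))) (z:=d)) => //; first exact/eqP.
  apply/negP=> H.
  have H1 : same_face e n d (n (e d)) by exact: fconnect1.
  have H3 := sf_trans H H1.
  have Hv : same_vertex n (n (n (n (e d)))) (n (e d)).
    by rewrite sv_sym; exact: (fconnect_iter n 2 (n (e d))).
  by move: (dist Hv (n2 (n (e d)))); rewrite H3.
right; exists (n (n (n (e d)))), (n (e d)); split.
- exact: connect0.
- exact: fconnect1.
- by rewrite sv_sym; exact: (fconnect_iter n 2 (n (e d))).
Qed.

Lemma tp1 d : tp d <= 1.
Proof.
rewrite /tp.
case E1: (face_size e n (e d) == 3); case E2: (face_size e n (n (n (n (e d)))) == 3) => //.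
exfalso; apply: (noadj (y:=e d) (z:=n (n (n (e d))))); first exact/eqP.
- by left; exact/eqP.
- apply: dist; first exact: (fconnect_iter n 3 (e d)).
  by rewrite eq_sym n3.
- left; exists (e (n (n (n (e d))))); last by rewrite e_inv; exact: connect0.
  rewrite sf_sym; have := fconnect1 phi (e (n (n (n (e d))))).
  by rewrite /face_perm e_inv n4.
Qed.

Definition a d := 6 + 2 * (face_size e n d == 3) - tp d.

Lemma per_dart d : 24 <= face_size e n d * a d.
Proof.
rewrite /a; have := k_ge3 d; have := tp1 d; have := @tp0 d.
move: (face_size e n d) (tp d) => k t.
case: k => [|[|[|[|[|k]]]]] //= H0 H1 _; try by rewrite H0.
nia.
Qed.

Lemma sum_a : \sum_d a d = 6 * #|D|.
Proof.
have E : \sum_d a d + \sum_d tp d = \sum_d (6 + 2 * (face_size e n d == 3)).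
  rewrite -big_split /=; apply: eq_bigr => d _; rewrite /a subnK //.
  by apply: leq_trans (tp1 d) _; rewrite leq_addr.
have Et : \sum_d tp d = 2 * \sum_d (face_size e n d == 3 : nat).
  rewrite /tp big_split /= mul2n -addnn.
  congr (_ + _).
    by rewrite [RHS](reindex_inj e_inj).
  rewrite [RHS](reindex_inj (h := fun d => n (n (n (e d))))) //.
  by move=> x y /n_inj/n_inj/n_inj/e_inj.
have H6 : \sum_d (6 + 2 * (face_size e n d == 3)) =
          6 * #|D| + 2 * \sum_d (face_size e n d == 3 : nat).
  rewrite big_split big_distrr /=; congr (_ + _).
  by rewrite (eq_bigl (fun d => d \in D)) // sum_nat_const mulnC.
lia.
Qed.

Lemma phi_sym : connect_sym (frel phi).
Proof. exact: (fconnect_sym phi_inj). Qed.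

Lemma per_root r : froots phi r -> 24 <= \sum_(d | froot phi d == r) a d.
Proof.
move=> Hr.
have Hc d : (froot phi d == r) = fconnect phi r d.
  by rewrite -{1}(eqP Hr) eq_sym (root_connect phi_sym).
have Ho d : froot phi d == r -> order phi d = order phi r.
  rewrite Hc => H; rewrite /order; symmetry.
  exact: (eq_card (same_connect phi_sym H)).
have Hk : 0 < order phi r by apply: order_gt0.
rewrite -(leq_pmul2l Hk) big_distrr /=.
apply: (@leq_trans (\sum_(d | froot phi d == r) 24)).
  rewrite (eq_bigl (fun d => d \in [pred d | froot phi d == r])) //.
  rewrite sum_nat_const leq_eqVlt; apply/orP; left; apply/eqP.
  congr (_ * _); rewrite /order; symmetry.
  by apply: eq_card => x; rewrite inE Hc.
apply: leq_sum => d Hd; rewrite -(Ho d Hd); exact: per_dart.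
Qed.

Lemma face_sum : 24 * fcard phi D <= \sum_d a d.
Proof.
rewrite (partition_big (froot phi) (froots phi)) => [|d _]; last first.
  exact: (roots_root phi_sym).
apply: (@leq_trans (\sum_(r | froots phi r) 24)); last first.
  by apply: leq_sum => r Hr; apply: per_root.
rewrite (eq_bigl (fun r => r \in [pred r | froots phi r])) //.
rewrite sum_nat_const mulnC leq_eqVlt; apply/orP; left; apply/eqP.
congr (_ * _); apply: eq_card => x; rewrite !inE.
by rewrite andbT.
Qed.

Lemma Fn : fcard n D * 4 = #|D|.
Proof.
apply: (fcard_order_set n_inj).
  by apply/subsetP => x _; rewrite inE (sc_n_deg4 sc).
by move=> x y _.
Qed.

Lemma Fe : fcard e D * 2 = #|D|.
Proof.
apply: (fcard_order_set e_inj); last by move=> x y _.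
apply/subsetP => x _; rewrite inE.
rewrite (@order_cycle _ e [:: x; e x]) //.
- by rewrite /= e_inv !eqxx.
- by rewrite /= inE andbT eq_sym (sc_e_nofix sc).
- by rewrite inE eqxx.
Qed.

Lemma contra : False.
Proof.
have F := face_sum; have S := sum_a; have A := Fn; have B := Fe.
have P := sc_planar sc.
lia.
Qed.

End Proof.

Theorem mainTheorem8 (D : finType) (e n : D -> D) :
  spherical_curve e n -> reduced e n ->
  (exists d : D, is_bigon e n d) \/
  (exists y z : D,
     [/\ is_trigon e n y,
         is_trigon e n z \/ face_size e n z = 4,
         ~~ same_face e n y z &
         share_edge e n y z \/ share_crossing e n y z]).
Proof.
move=> sc red; apply: NNPP => Hn.
have nobig : forall d, face_size e n d <> 2.
  by move=> d H; apply: Hn; left; exists d.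
have noadj : forall y z : D, is_trigon e n y ->
  (is_trigon e n z \/ face_size e n z = 4) -> ~~ same_face e n y z ->
  (share_edge e n y z \/ share_crossing e n y z) -> False.
  by move=> y z H1 H2 H3 H4; apply: Hn; right; exists y, z; split.
exact: (contra sc red nobig noadj).
Qed.
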